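(* For all integers $M,N,p\ge1$, $$\delta_p(M,N)=\frac{1}{(MN)^p}\sum_{\substack{\pi,\sigma\in P(p)\\ \pi\triangleright\sigma}}\frac{M!}{(M-|\pi|)!}\cdot\frac{N!}{(N-|\sigma|)!},$$ where $\frac{M!}{(M-s)!}$ is interpreted as $0$ when $s>M$ (and similarly for $N$).
   Context: $P(p)$ is the set of partitions of $\{1,\dots,p\}$, and $|\pi|$ is the number of blocks of $\pi$. For $\pi,\sigma\in P(p)$, write $\pi\triangleright\sigma$ if for every block $\beta$ of $\pi$ and every block $\gamma$ of $\sigma$, $\#\{x\in\{1,\dots,p\}:x\in\beta,\ x\in\gamma\}=\#\{x\in\{1,\dots,p\}:x\in\beta,\ x+1\in\gamma\}$, indices taken modulo $p$ (so $p+1=1$). For integers $M,N,p\ge1$, $\delta_p(M,N)=\frac{1}{(MN)^p}\#\{(a,b)\in\mathbb Z_M^p\times\mathbb Z_N^p:\{(a_y,b_y)\}_{y=1}^p=\{(a_y,b_{y+1})\}_{y=1}^p\text{ as multisets}\}$, with $b_{p+1}=b_1$. *)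

(* Defs.v *)
From HB Require Import structures.
From mathcomp Require Import all_boot all_order all_algebra.
Set Implicit Arguments. Unset Strict Implicit. Unset Printing Implicit Defensive.
Import Order.TTheory GRing.Theory Num.Theory.

(* The ground set {1,...,p} is represented by 'I_p = {0,...,p-1} (x <-> x+1);
   the cyclic successor x |-> x+1 (mod p) is [ordS x]. *)

Definition Part (p : nat) :=
  [set P : {set {set 'I_p}} | partition P [set: 'I_p]].

Definition tri (p : nat) (pi sigma : {set {set 'I_p}}) : bool :=
  [forall beta in pi, forall gamma in sigma,
     #|[set x : 'I_p | (x \in beta) && (x \in gamma)]| ==
     #|[set x : 'I_p | (x \in beta) && (ordS x \in gamma)]| ].

Definition delta_count (p M N : nat) : nat :=
  #|[set ab : {ffun 'I_p -> 'I_M} * {ffun 'I_p -> 'I_N} |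
      perm_eq [seq (ab.1 y, ab.2 y) | y <- enum 'I_p]
              [seq (ab.1 y, ab.2 (ordS y)) | y <- enum 'I_p] ]|.

Definition delta (p M N : nat) : rat :=
  (delta_count p M N)%:R / ((M * N) ^ p)%N%:R.

(* Main.v *)
Require Import Defs.
From HB Require Import structures.
From mathcomp Require Import all_boot all_order all_algebra.
Import Order.TTheory GRing.Theory Num.Theory.
Lemma count_card (T : finType) (P : pred T) : count P (enum T) = #|[set y | P y]|.
Proof. rewrite cardE /enum_mem size_filter count_filter. by apply: eq_count => y; rewrite /= !inE andbT. Qed.
Lemma perm_eq_mem (T : eqType) (s t : seq T) :
  perm_eq s t <-> forall z, count_mem z s = count_mem z t.
Proof. split; first by move/permP=> H z; apply: H. by move=> H; apply/allP=> z _; apply/eqP. Qed.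

Lemma cond_tri p M N (a : 'I_p -> 'I_M) (b : 'I_p -> 'I_N) :
  perm_eq [seq (a y, b y) | y <- enum 'I_p] [seq (a y, b (ordS y)) | y <- enum 'I_p]
  = tri (preim_partition a setT) (preim_partition b setT).
Proof.
have E1 u v : count_mem (u, v) [seq (a y, b y) | y <- enum 'I_p] =
   #|[set y | (a y == u) && (b y == v)]|.
  by rewrite count_map count_card; apply: eq_card => y; rewrite !inE /= xpair_eqE.
have E2 u v : count_mem (u, v) [seq (a y, b (ordS y)) | y <- enum 'I_p] =
   #|[set y | (a y == u) && (b (ordS y) == v)]|.
  by rewrite count_map count_card; apply: eq_card => y; rewrite !inE /= xpair_eqE.
apply/idP/idP.
- move/perm_eq_mem => H; apply/forall_inP => B /imsetP [x0 _ ->].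
  apply/forall_inP => G /imsetP [x1 _ ->].
  have := H (a x0, b x1); rewrite E1 E2 => HH; apply/eqP.
  rewrite (eq_card (B := [set y | (a y == a x0) && (b y == b x1)])); last first.
    by move=> y; rewrite !inE [a x0 == _]eq_sym [b x1 == _]eq_sym.
  rewrite HH; apply: eq_card => y; by rewrite !inE [a x0 == _]eq_sym [b x1 == _]eq_sym.
- move/forall_inP => H; apply/perm_eq_mem => [[u v]]; rewrite E1 E2.
  case: (boolP [exists x, a x == u]) => [/existsP [x0 /eqP <-]|nu]; last first.
    have e y : (a y == u) = false.
      by apply/negbTE; apply: contra nu => e; apply/existsP; exists y.
    by apply: eq_card => y; rewrite !inE e.
  case: (boolP [exists x, b x == v]) => [/existsP [x1 /eqP <-]|nv]; last first.
    have e y : (b y == v) = false.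
      by apply/negbTE; apply: contra nv => e; apply/existsP; exists y.
    by apply: eq_card => y; rewrite !inE !e andbF.
  have hB : [set y in setT | a x0 == a y] \in preim_partition a setT.
    by apply/imsetP; exists x0.
  have hG : [set y in setT | b x1 == b y] \in preim_partition b setT.
    by apply/imsetP; exists x1.
  have /forall_inP := H _ hB => /(_ _ hG) /eqP HH.
  rewrite (eq_card (B := [set x | (x \in [set y in setT | a x0 == a y]) && (x \in [set y in setT | b x1 == b y])])); last first.
    by move=> y; rewrite !inE [a x0 == _]eq_sym [b x1 == _]eq_sym.
  rewrite HH; apply: eq_card => y; by rewrite !inE [a x0 == _]eq_sym [b x1 == _]eq_sym.
Qed.

Lemma preim_eq (T : finType) (r1 r2 : eqType) (f : T -> r1) (g : T -> r2) D :
  (forall x y, (f x == f y) = (g x == g y)) -> preim_partition f D = preim_partition g D.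
Proof.
move=> H; rewrite /preim_partition /equivalence_partition.
by apply: eq_imset => x; apply/setP => y; rewrite !inE H.
Qed.

Section Count.
Variables (p M : nat) (pi : {set {set 'I_p}}).
Hypothesis hpi : partition pi [set: 'I_p].
Let D := {B : {set 'I_p} | B \in pi}.
Lemma inpi x : pblock pi x \in pi.
Proof. by rewrite pblock_mem // (cover_partition hpi) inE. Qed.
Definition blk x : D := exist _ (pblock pi x) (inpi x).
Definition Phi (g : {ffun D -> 'I_M}) : {ffun 'I_p -> 'I_M} := [ffun x => g (blk x)].

Lemma blk_surj (d : D) : exists x, blk x = d.
Proof.
case: d => B hB; case/and3P: hpi => _ tI n0.
have /set0Pn [x Bx] : B != set0 by apply: contraNneq n0 => <-.
exists x; apply: val_inj => /=; exact: def_pblock tI hB Bx.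
Qed.

Lemma blk_surjb (d : D) : exists x, blk x == d.
Proof. by have [x e] := blk_surj d; exists x; rewrite e. Qed.

Lemma Phi_inj : injective Phi.
Proof.
move=> g1 g2 e; apply/ffunP => d; have [x <-] := blk_surj d.
by have := congr1 (fun f : {ffun 'I_p -> 'I_M} => f x) e; rewrite !ffunE.
Qed.

Lemma card_ker :
  #|[set a : {ffun 'I_p -> 'I_M} | preim_partition a setT == pi]| = M ^_ #|pi|.
Proof.
have ->: [set a : {ffun 'I_p -> 'I_M} | preim_partition a setT == pi] =
   Phi @: [set g : {ffun D -> 'I_M} | injectiveb g].
  apply/setP => a; rewrite inE; apply/eqP/imsetP.
  - move=> ea.
    have key x y : (a x == a y) = (y \in pblock pi x).
      rewrite -ea pblock_equivalence_partition // => u v w _ _ _.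
      by split=> // /eqP ->.
    pose g := [ffun d : D => a (xchoose (blk_surjb d))].
    have ga x : g (blk x) = a x.
      rewrite ffunE /=; apply/eqP; rewrite key.
      have := xchooseP (blk_surjb (blk x)) => /eqP /(congr1 val) /= ->.
      by rewrite mem_pblock (cover_partition hpi) inE.
    exists g; last by apply/ffunP => x; rewrite ffunE ga.
    rewrite inE; apply/injectiveP => d1 d2.
    have [x1 <-] := blk_surj d1; have [x2 <-] := blk_surj d2.
    rewrite !ga => /eqP; rewrite key => h; apply: val_inj => /=.
    by apply/esym; apply: same_pblock h; case/and3P: hpi.
  - case=> g; rewrite inE => /injectiveP ig ->.
    rewrite -[RHS](preim_partition_pblock hpi); apply: preim_eq => x y.
    by rewrite !ffunE (inj_eq ig) -val_eqE.
rewrite card_imset; last exact: Phi_inj.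
by rewrite card_inj_ffuns card_ord card_sig; congr (_ ^_ _); apply: eq_card.
Qed.
End Count.

Lemma count_sum p M N : delta_count p M N =
  \sum_(pi in Part p) \sum_(sigma in Part p | tri pi sigma) (M ^_ #|pi| * N ^_ #|sigma|).
Proof.
rewrite /delta_count -sum1_card.
rewrite (eq_bigl (fun ab : {ffun 'I_p -> 'I_M} * {ffun 'I_p -> 'I_N} =>
   perm_eq [seq (ab.1 y, ab.2 y) | y <- enum 'I_p]
              [seq (ab.1 y, ab.2 (ordS y)) | y <- enum 'I_p])); last by move=> ab; rewrite inE.
rewrite big_mkcond /=.
rewrite -(pair_big xpredT xpredT (fun (a : {ffun 'I_p -> 'I_M}) (b : {ffun 'I_p -> 'I_N}) =>
   if perm_eq [seq (a y, b y) | y <- enum 'I_p] [seq (a y, b (ordS y)) | y <- enum 'I_p]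
   then 1 else 0)) /=.
have inner (a : {ffun 'I_p -> 'I_M}) :
  \sum_(b : {ffun 'I_p -> 'I_N})
   (if perm_eq [seq (a y, b y) | y <- enum 'I_p] [seq (a y, b (ordS y)) | y <- enum 'I_p]
    then 1 else 0) =
  \sum_(sigma in Part p) (tri (preim_partition a setT) sigma) * N ^_ #|sigma|.
  rewrite (partition_big (fun b : {ffun 'I_p -> 'I_N} => preim_partition b setT) (mem (Part p))) /=; last first.
    by move=> b _; rewrite inE preim_partitionP.
  apply: eq_bigr => sigma; rewrite inE => hs.
  rewrite (eq_bigr (fun _ => nat_of_bool (tri (preim_partition a setT) sigma))); last first.
    by move=> b /eqP <-; rewrite cond_tri; case: tri.
  rewrite (eq_bigl (fun b => b \in [set b : {ffun 'I_p -> 'I_N} | preim_partition b setT == sigma])); last first.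
    by move=> b; rewrite inE.
  by rewrite sum_nat_const card_ker // mulnC.
rewrite (eq_bigr _ (fun a _ => inner a)).
rewrite (partition_big (fun a : {ffun 'I_p -> 'I_M} => preim_partition a setT) (mem (Part p))) /=; last first.
  by move=> a _; rewrite inE preim_partitionP.
apply: eq_bigr => pi; rewrite inE => hpi.
rewrite (eq_bigr (fun _ => \sum_(sigma in Part p) tri pi sigma * N ^_ #|sigma|)); last first.
  by move=> a /eqP ->.
rewrite (eq_bigl (fun a => a \in [set a : {ffun 'I_p -> 'I_M} | preim_partition a setT == pi])); last first.
  by move=> a; rewrite inE.
rewrite sum_nat_const card_ker // big_distrr /= [RHS]big_mkcond /=.
rewrite big_mkcond; apply: eq_bigr => sigma _; case: (sigma \in Part p); case: tri; by rewrite ?mul1n ?muln1 ?muln0.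
Qed.

Local Open Scope ring_scope.

Theorem proposition7p1 (M N p : nat) (hM : (1 <= M)%N) (hN : (1 <= N)%N)
    (hp : (1 <= p)%N) :
  delta p M N =
  (((M * N) ^ p)%N%:R)^-1 *
    \sum_(pi in Part p) \sum_(sigma in Part p | tri pi sigma)
        ((M ^_ #|pi|) * (N ^_ #|sigma|))%N%:R.
Proof.
rewrite /delta count_sum natr_sum mulrC; congr (_ * _).
by apply: eq_bigr => pi _; rewrite natr_sum.
Qed.
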